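(* Let $U\subseteq\mathbb{C}^{n\times n}$ and $V\subseteq\mathbb{C}^{k\times k}$ be linear subspaces and $U\circledast V\subseteq\mathbb{C}^{nk\times nk}$ the span of all Kronecker products $A\circledast B$ with $A\in U$, $B\in V$. Let $\mu_U,\mu_V,\mu_{U\circledast V}$ be the structure tensors of the matrix-vector products $U\times\mathbb{C}^n\to\mathbb{C}^n$, $V\times\mathbb{C}^k\to\mathbb{C}^k$, $(U\circledast V)\times\mathbb{C}^{nk}\to\mathbb{C}^{nk}$. Suppose $\operatorname{rank}(\mu_U)=\dim U$, $\operatorname{rank}(\mu_V)=\dim V$, and that the images of $U\otimes\mathbb{C}^n\to\mathbb{C}^n$ and $V\otimes\mathbb{C}^k\to\mathbb{C}^k$ (induced by the matrix-vector products) are all of $\mathbb{C}^n$ and $\mathbb{C}^k$ respectively. Then $\operatorname{rank}(\mu_{U\circledast V})=\operatorname{rank}(\mu_U)\operatorname{rank}(\mu_V)$.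
   Context: $\circledast$ denotes the Kronecker product of matrices. Structure tensor of a bilinear map $\beta:U\times V\to W$: the unique $\mu_\beta\in U^*\otimes V^*\otimes W$ with $\beta(u,v)=\mu_\beta(u,v,\cdot)$. Rank: least number of decomposable tensors summing to the tensor. *)

(* Defs.v *)
From HB Require Import structures.
From mathcomp Require Import all_boot all_order all_algebra.
Set Implicit Arguments. Unset Strict Implicit. Unset Printing Implicit Defensive.
Import Order.TTheory GRing.Theory Num.Theory.
Local Open Scope ring_scope.

Lemma kron_div_proof n k (p : 'I_(n * k)) : (p %/ k < n)%N.
Proof.
case: k p => [|k] p; first by case: p => /= m; rewrite muln0.
by rewrite ltn_divLR // ltn_ord.
Qed.

Lemma kron_mod_proof n k (p : 'I_(n * k)) : (p %% k < k)%N.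
Proof.
case: k p => [|k] p; first by case: p => /= m; rewrite muln0.
by rewrite ltn_pmod.
Qed.

Definition kron_fst n k (p : 'I_(n * k)) : 'I_n := Ordinal (kron_div_proof p).
Definition kron_snd n k (p : 'I_(n * k)) : 'I_k := Ordinal (kron_mod_proof p).

(* Kronecker product A [x] B : entry ((i1,i2),(j1,j2)) = A i1 j1 * B i2 j2,
   where (i1,i2) is identified with i1 * k + i2. *)
Definition kron (C : pzRingType) n k (A : 'M[C]_n) (B : 'M[C]_k) : 'M[C]_(n * k) :=
  \matrix_(p, q) (A (kron_fst p) (kron_fst q) * B (kron_snd p) (kron_snd q)).

Definition is_kron_span (C : fieldType) n k (U : {vspace 'M[C]_n})
    (V : {vspace 'M[C]_k}) (W : {vspace 'M[C]_(n * k)}) : Prop :=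
  (forall A B, A \in U -> B \in V -> kron A B \in W) /\
  (forall W' : {vspace 'M[C]_(n * k)},
     (forall A B, A \in U -> B \in V -> kron A B \in W') -> (W <= W')%VS).

(* The structure tensor mu_U of the matrix-vector product U x C^m -> C^m,
   an element of U^* [x] (C^m)^* [x] C^m, is a sum of r decomposable tensors
   alpha_i [x] beta_i [x] w_i  (alpha_i a linear form on U, beta_i a linear form
   on C^m given by a row vector, w_i in C^m). *)
Definition mv_rank_le (C : fieldType) m (U : {vspace 'M[C]_m}) (r : nat) : Prop :=
  exists (alpha : 'I_r -> 'M[C]_m -> C) (beta : 'I_r -> 'rV[C]_m)
         (w : 'I_r -> 'cV[C]_m),
    (forall i (c : C) A B, A \in U -> B \in U ->
       alpha i (c *: A + B) = c * alpha i A + alpha i B) /\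
    (forall A (v : 'cV[C]_m), A \in U ->
       A *m v = \sum_(i < r) (alpha i A * (beta i *m v) 0 0) *: w i).

Definition mv_rank_is (C : fieldType) m (U : {vspace 'M[C]_m}) (r : nat) : Prop :=
  mv_rank_le U r /\ forall r', mv_rank_le U r' -> (r <= r')%N.

Definition mv_image_full (C : fieldType) m (U : {vspace 'M[C]_m}) : Prop :=
  forall W : {vspace 'cV[C]_m},
    (forall A (v : 'cV[C]_m), A \in U -> A *m v \in W) -> W = fullv.

(* Main.v *)
Require Import Defs.
From HB Require Import structures.
From mathcomp Require Import all_boot all_order all_algebra.
From mathcomp Require Import zify.
Import Order.TTheory GRing.Theory Num.Theory.
Local Open Scope ring_scope.
Set Implicit Arguments. Unset Strict Implicit.

Lemma kidx_proof d e (i : 'I_d) (j : 'I_e) : (i * e + j < d * e)%N.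
Proof. have := ltn_ord i; have := ltn_ord j; nia. Qed.

Definition kidx d e (i : 'I_d) (j : 'I_e) : 'I_(d * e) := Ordinal (kidx_proof i j).

Lemma kidx_fst d e (i : 'I_d) (j : 'I_e) : kron_fst (kidx i j) = i.
Proof.
apply: val_inj => /=; have e0 : (0 < e)%N by case: j => /= *; lia.
by rewrite divnMDl // divn_small ?addn0.
Qed.

Lemma kidx_snd d e (i : 'I_d) (j : 'I_e) : kron_snd (kidx i j) = j.
Proof. by apply: val_inj => /=; rewrite modnMDl modn_small. Qed.

Lemma kidxK d e (p : 'I_(d * e)) : kidx (kron_fst p) (kron_snd p) = p.
Proof. by apply: val_inj => /=; rewrite -divn_eq. Qed.

Lemma big_kron (R : Type) (idx : R) (op : Monoid.com_law idx) d e (F : 'I_(d * e) -> R) :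
  \big[op/idx]_(p < d * e) F p = \big[op/idx]_(i < d) \big[op/idx]_(j < e) F (kidx i j).
Proof.
rewrite pair_big /=.
rewrite (reindex (fun x : 'I_d * 'I_e => kidx x.1 x.2)) //=.
exists (fun p => (kron_fst p, kron_snd p)) => [[i j] _|p _] /=.
  by rewrite kidx_fst kidx_snd.
exact: kidxK.
Qed.

Section K.
Variable C : fieldType.

Lemma kron_sums n k d e (a : 'I_d -> C) (F : 'I_d -> 'M[C]_n) (b : 'I_e -> C) (G : 'I_e -> 'M[C]_k) :
  kron (\sum_i a i *: F i) (\sum_j b j *: G j) =
  \sum_i \sum_j (a i * b j) *: kron (F i) (G j).
Proof.
apply/matrixP => p q; rewrite mxE !summxE mulr_suml; apply: eq_bigr => i _.
rewrite !summxE mulr_sumr; apply: eq_bigr => j _.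
by rewrite !mxE mulrACA.
Qed.

Definition kcol n k (w : 'cV[C]_n) (w' : 'cV[C]_k) : 'cV[C]_(n * k) :=
  \col_p (w (kron_fst p) 0 * w' (kron_snd p) 0).
Definition krow n k (w : 'rV[C]_n) (w' : 'rV[C]_k) : 'rV[C]_(n * k) :=
  \row_p (w 0 (kron_fst p) * w' 0 (kron_snd p)).

Lemma kron_rank1 n k (w : 'cV[C]_n) (b : 'rV[C]_n) (w' : 'cV[C]_k) (b' : 'rV[C]_k) :
  kron (w *m b) (w' *m b') = kcol w w' *m krow b b'.
Proof.
apply/matrixP => p q; rewrite !mxE !big_ord1 !mxE.
by rewrite mulrACA.
Qed.

Lemma kron_free n k d e (M : d.-tuple 'M[C]_n) (N : e.-tuple 'M[C]_k) :
  free M -> free N ->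
  free [tuple kron M`_(kron_fst p) N`_(kron_snd p) | p < d * e].
Proof.
move=> fM fN; apply/freeP => c hc p.
rewrite -(kidxK p); move: (kron_fst p) (kron_snd p) => i j.
have H : forall a b, \sum_(j' < e) ((\sum_(i < d) c (kidx i j') *: M`_i) a b) *: N`_j' = 0.
  move=> a b; apply/matrixP => a2 b2.
  have := congr1 (fun X : 'M[C]_(n * k) => X (kidx a a2) (kidx b b2)) hc.
  rewrite [in RHS]mxE summxE => hs.
  rewrite [in RHS]mxE -[RHS]hs big_kron exchange_big summxE.
  apply: eq_bigr => j' _; rewrite mxE summxE mulr_suml; apply: eq_bigr => i' _.
  by rewrite !mxE nth_mktuple !mxE !kidx_fst !kidx_snd mulrA.
have H2 : \sum_(i < d) c (kidx i j) *: M`_i = 0.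
  apply/matrixP => a b; rewrite [in RHS]mxE.
  by move/freeP: fN => /(_ _ (H a b) j).
by move/freeP: fM => /(_ _ H2 i).
Qed.
End K.
Section Aux.
Variable C : fieldType.

Lemma mulmx_ext m (A B : 'M[C]_m) : (forall v : 'cV[C]_m, A *m v = B *m v) -> A = B.
Proof.
move=> H; apply/matrixP => a j.
have := congr1 (fun M : 'cV[C]_m => M a 0) (H (delta_mx j 0)).
by rewrite -!colE !mxE.
Qed.

Lemma alpha_sum m (U : {vspace 'M[C]_m}) (f : 'M[C]_m -> C)
  (hf : forall (c : C) A B, A \in U -> B \in U -> f (c *: A + B) = c * f A + f B)
  (I : Type) (s : seq I) (kk : I -> C) (X : I -> 'M[C]_m) :
  (forall i, X i \in U) ->
  f (\sum_(j <- s) kk j *: X j) = \sum_(j <- s) kk j * f (X j).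
Proof.
move=> XU; have f0 : f 0 = 0.
  have := hf (-1) 0 0 (mem0v _) (mem0v _).
  by rewrite scaler0 add0r mulN1r addNr.
elim: s => [|x s IH]; first by rewrite !big_nil.
rewrite !big_cons hf ?IH // memv_suml // => j _; exact: memvZ.
Qed.

Lemma rank_lb m (U : {vspace 'M[C]_m}) r : mv_rank_le U r -> (\dim U <= r)%N.
Proof.
case=> alpha [beta [w [lin eq]]].
set X := vbasis U.
have XU : forall j, X`_j \in U.
  move=> j; case: (ltnP j (\dim U)) => hj.
    by rewrite (vbasis_mem (mem_nth 0 _)) // size_tuple.
  by rewrite nth_default ?mem0v // size_tuple.
pose Y := [tuple \row_(i < r) alpha i X`_j | j < \dim U].
have fY : free Y.
  apply/freeP => kk hk j.
  have A0 : \sum_(j < \dim U) kk j *: X`_j = 0.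
    apply: mulmx_ext => v; rewrite mul0mx eq ?memv_suml // => [|i _]; last exact: memvZ.
    apply: big1 => i _.
    have := congr1 (fun M : 'rV[C]_r => M 0 i) hk.
    rewrite summxE mxE => hs.
    rewrite (alpha_sum (lin i)) //.
    have -> : \sum_(j <- index_enum 'I_(\dim U)) kk j * alpha i X`_j = 0.
      rewrite -[RHS]hs; apply: eq_bigr => j' _; rewrite mxE nth_mktuple mxE.
      by [].
    by rewrite mul0r scale0r.
  by move/freeP: (basis_free (vbasisP U)) => /(_ kk A0 j).
have := dimvS (subvf <<Y>>); rewrite dimvf.
by move/eqP: fY => ->; rewrite size_tuple /dim /= mul1n.
Qed.

Lemma rank1_mul m (c : 'cV[C]_m) (rr : 'rV[C]_m) (v : 'cV[C]_m) :
  c *m rr *m v = (rr *m v) 0 0 *: c.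
Proof. by rewrite -mulmxA {1}[rr *m v]mx11_scalar mul_mx_scalar. Qed.

Lemma rank_basis m (U : {vspace 'M[C]_m}) :
  mv_rank_le U (\dim U) ->
  exists (w : 'I_(\dim U) -> 'cV[C]_m) (b : 'I_(\dim U) -> 'rV[C]_m),
    basis_of U [tuple w i *m b i | i < \dim U].
Proof.
case=> alpha [beta [w [lin eq]]]; exists w, beta.
rewrite basisEdim size_tuple leqnn andbT; apply/subvP => A AU.
have -> : A = \sum_(i < \dim U) alpha i A *: [tuple w i *m beta i | i < \dim U]`_i.
  apply: mulmx_ext => v; rewrite eq // mulmx_suml; apply: eq_bigr => i _.
  by rewrite nth_mktuple -scalemxAl rank1_mul scalerA.
apply: memv_suml => i _; apply: memvZ; apply: memv_span; apply: mem_nth; by rewrite size_tuple ltn_ord.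
Qed.

Lemma rank_ub m r (c : 'I_r -> 'cV[C]_m) (rr : 'I_r -> 'rV[C]_m) (W : {vspace 'M[C]_m}) :
  (W <= <<[tuple c i *m rr i | i < r]>>)%VS -> mv_rank_le W r.
Proof.
move=> sW; set X := [tuple c i *m rr i | i < r].
exists (fun i A => coord X i A), rr, c; split.
  by move=> i a A B _ _; rewrite linearP.
move=> A v AW; rewrite {1}(coord_span (subvP sW _ AW)) mulmx_suml.
apply: eq_bigr => i _; rewrite nth_mktuple -scalemxAl rank1_mul scalerA.
by [].
Qed.
End Aux.

Theorem mainTheorem12 (C : numClosedFieldType) (n k : nat)
    (U : {vspace 'M[C]_n}) (V : {vspace 'M[C]_k}) (W : {vspace 'M[C]_(n * k)})
    (rU rV : nat) :
  is_kron_span U V W ->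
  mv_rank_is U rU -> mv_rank_is V rV ->
  rU = \dim U -> rV = \dim V ->
  mv_image_full U -> mv_image_full V ->
  mv_rank_is W (rU * rV).
Proof.
move=> [WK Wmin] [leU _] [leV _] eU eV _ _; subst rU rV.
have [w [b bU]] := rank_basis leU; have [w' [b' bV]] := rank_basis leV.
set M := [tuple w i *m b i | i < \dim U] in bU.
set N := [tuple w' i *m b' i | i < \dim V] in bV.
pose c (p : 'I_(\dim U * \dim V)) := kcol (w (kron_fst p)) (w' (kron_snd p)).
pose rr (p : 'I_(\dim U * \dim V)) := krow (b (kron_fst p)) (b' (kron_snd p)).
set K := [tuple c p *m rr p | p < \dim U * \dim V].
have KE : K = [tuple kron M`_(kron_fst p) N`_(kron_snd p) | p < \dim U * \dim V].
  by apply: eq_mktuple => p; rewrite !nth_mktuple kron_rank1.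
have MU : forall i : 'I_(\dim U), M`_i \in U.
  move=> i; suff: M`_i \in <<M>>%VS by rewrite (span_basis bU).
  apply: memv_span; apply: mem_nth.
  by rewrite size_tuple ltn_ord.
have NV : forall i : 'I_(\dim V), N`_i \in V.
  move=> i; suff: N`_i \in <<N>>%VS by rewrite (span_basis bV).
  apply: memv_span; apply: mem_nth.
  by rewrite size_tuple ltn_ord.
have sWK : (W <= <<K>>)%VS.
  apply: Wmin => A B AU BV.
  have {}AU : A \in <<M>>%VS by rewrite (span_basis bU).
  have {}BV : B \in <<N>>%VS by rewrite (span_basis bV).
  rewrite (coord_span AU) (coord_span BV) kron_sums.
  apply: memv_suml => i _; apply: memv_suml => j _; apply: memvZ.
  have -> : kron M`_i N`_j = K`_(kidx i j).
    by rewrite KE (nth_mktuple _ _ (kidx i j)) kidx_fst kidx_snd.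
  by apply: memv_span; apply: mem_nth; rewrite size_tuple ltn_ord.
have sKW : (<<K>> <= W)%VS.
  apply/span_subvP => X; rewrite KE => /tnthP [p ->]; rewrite tnth_mktuple.
  exact: WK.
have fK : free K by rewrite KE; apply: kron_free; apply: basis_free; eassumption.
split; first exact: rank_ub sWK.
move=> r' /rank_lb hr'; apply: leq_trans hr'.
by have := dimvS sKW; move/eqP: fK => ->; rewrite size_tuple.
Qed.
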